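(* Let $\mathcal{X}=[0,r]^d$ and let $f:\mathcal{X}\to\mathbb{R}$ be continuous with a unique maximizer $\bm{x}^*$, and suppose $c_{\mathrm{gap}}>0$ is such that $f(\bm{x}^* )>f(\tilde{\bm{x}})+c_{\mathrm{gap}}$ for every local maximizer $\tilde{\bm{x}}\neq\bm{x}^*$ of $f$ on $\mathcal{X}$. Then: (i) If $c_{\mathrm{lin}},\rho_{\mathrm{lin}}>0$ satisfy $f(\bm{x})\le f(\bm{x}^* )-c_{\mathrm{lin}}\|\bm{x}^*-\bm{x}\|_2$ for all $\bm{x}\in\mathcal{B}_2(\rho_{\mathrm{lin}};\bm{x}^* )$, then every $\bm{x}\in\mathcal{X}$ with $f(\bm{x}^* )-f(\bm{x})\le\varepsilon_1$, where $\varepsilon_1=\min\{c_{\mathrm{gap}},c_{\mathrm{lin}}\rho_{\mathrm{lin}}\}$, belongs to $\mathcal{B}_2(\rho_{\mathrm{lin}};\bm{x}^* )$. (ii) If $c_{\mathrm{quad}},\rho_{\mathrm{quad}}>0$ satisfy $f(\bm{x})\le f(\bm{x}^* )-c_{\mathrm{quad}}\|\bm{x}^*-\bm{x}\|_2^2$ for all $\bm{x}\in\mathcal{B}_2(\rho_{\mathrm{quad}};\bm{x}^* )$, then every $\bm{x}\in\mathcal{X}$ with $f(\bm{x}^* )-f(\bm{x})\le\varepsilon_2$, where $\varepsilon_2=\min\{c_{\mathrm{gap}},c_{\mathrm{quad}}\rho_{\mathrm{quad}}^2\}$, belongs to $\mathcal{B}_2(\rho_{\mathrm{quad}};\bm{x}^*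 )$.
   Context: $\mathcal{B}_2(\rho;\bm{x}^* )=\{\bm{x}\in\mathcal{X}:\|\bm{x}-\bm{x}^*\|_2\le\rho\}$. *)

(* Defs.v *)
From HB Require Import structures.
From mathcomp Require Import all_boot all_order all_algebra.
From mathcomp Require Import all_classical all_reals all_analysis.
Set Implicit Arguments. Unset Strict Implicit. Unset Printing Implicit Defensive.
Import Order.TTheory GRing.Theory Num.Theory.
Import numFieldNormedType.Exports.
Local Open Scope classical_set_scope.
Local Open Scope ring_scope.

Section Defs.
Variables (R : realType) (d : nat).

Definition norm2 (v : 'rV[R]_d) : R := Num.sqrt (\sum_(i < d) (v ord0 i) ^+ 2).

Definition cube (r : R) : set 'rV[R]_d :=
  [set x | forall i : 'I_d, 0 <= x ord0 i <= r].

Definition ball2 (X : set 'rV[R]_d) (rho : R) (xs : 'rV[R]_d) : set 'rV[R]_d :=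
  [set x | X x /\ norm2 (x - xs) <= rho].

Definition unique_maximizer (X : set 'rV[R]_d) (f : 'rV[R]_d -> R) (xs : 'rV[R]_d) :=
  X xs /\ forall x, X x -> x <> xs -> f x < f xs.

Definition local_maximizer (X : set 'rV[R]_d) (f : 'rV[R]_d -> R) (xt : 'rV[R]_d) :=
  X xt /\ exists2 delta : R, 0 < delta &
    forall y, X y -> norm2 (y - xt) < delta -> f y <= f xt.
End Defs.

(* Main.v *)
Require Import Defs.
From HB Require Import structures.
From mathcomp Require Import all_boot all_order all_algebra.
From mathcomp Require Import all_classical all_reals all_analysis.
From mathcomp Require Import lra.
Import Order.TTheory GRing.Theory Num.Theory.
Import numFieldNormedType.Exports.
Local Open Scope classical_set_scope.
Local Open Scope ring_scope.
Set Implicit Arguments. Unset Strict Implicit. Unset Printing Implicit Defensive.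

Section Aux.
Variables (R : realType) (d : nat).

Definition sq2 (v : 'rV[R]_d) : R := \sum_(i < d) (v ord0 i) ^+ 2.

Lemma sq2_ge0 (v : 'rV[R]_d) : 0 <= sq2 v.
Proof. by apply: sumr_ge0 => i _; exact: sqr_ge0. Qed.

Lemma norm2E (v : 'rV[R]_d) : norm2 v = Num.sqrt (sq2 v).
Proof. by []. Qed.

Lemma sq2N (v : 'rV[R]_d) : sq2 (- v) = sq2 v.
Proof. by apply: eq_bigr => i _; rewrite mxE sqrrN. Qed.

Lemma norm2N (v : 'rV[R]_d) : norm2 (- v) = norm2 v.
Proof. by rewrite !norm2E sq2N. Qed.

Lemma coord_le_norm2 (v : 'rV[R]_d) i : `|v ord0 i| <= norm2 v.
Proof.
rewrite norm2E -sqrtr_sqr ler_sqrt; last exact: sq2_ge0.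
rewrite /sq2 (bigD1 i) //= lerDl.
by apply: sumr_ge0 => j _; exact: sqr_ge0.
Qed.

Lemma sq2_cont (xs : 'rV[R]_d) : continuous (fun y : 'rV[R]_d => sq2 (y - xs)).
Proof.
rewrite /sq2.
elim: (index_enum _) => [|i s IH].
  have -> : (fun y : 'rV[R]_d => \sum_(j <- [::]) (y - xs) ord0 j ^+ 2) = fun=> 0.
    by apply: funext => y; rewrite big_nil.
  exact: cst_continuous.
have -> : (fun y : 'rV[R]_d => \sum_(j <- i :: s) (y - xs) ord0 j ^+ 2) =
  (fun y : 'rV[R]_d => (y - xs) ord0 i ^+ 2) + (fun y => \sum_(j <- s) (y - xs) ord0 j ^+ 2).
  by apply: funext => y; rewrite big_cons.
have ci : continuous (fun y : 'rV[R]_d => (y - xs) ord0 i).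
  have -> : (fun y : 'rV[R]_d => (y - xs) ord0 i) =
     (fun y : 'rV[R]_d => y ord0 i) + (fun=> - xs ord0 i).
    by apply: funext => y; rewrite !mxE.
  move=> z; apply: continuousD; first exact: coord_continuous.
  exact: cst_continuous.
move=> y; apply: continuousD; last exact: IH.
exact: (continuousM (ci y) (ci y)).
Qed.
End Aux.

Lemma sq20 (R : realType) d : sq2 (0 : 'rV[R]_d) = 0.
Proof. by rewrite /sq2 big1 // => i _; rewrite mxE expr0n. Qed.

Lemma cube_compact (R : realType) d (r : R) : compact (cube r : set 'rV[R]_d).
Proof.
have -> : cube r = [set v : 'rV[R]_d | forall i, `[0, r]%classic (v ord0 i)].
  by apply: funext => v; apply: propext; split => H i; have := H i; rewrite /= in_itv.
exact: (@rV_compact R d (fun=> `[0, r]%classic) (fun=> @segment_compact R 0 r)).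
Qed.

Lemma key (R : realType) (d : nat) (r : R) (f : 'rV[R]_d -> R)
    (xs : 'rV[R]_d) (cgap eps rho : R) (x : 'rV[R]_d) :
  {within cube r, continuous f} ->
  (forall xt, local_maximizer (cube r) f xt -> xt <> xs -> f xs > f xt + cgap) ->
  0 < rho -> eps <= cgap ->
  (forall y, cube r y -> rho ^+ 2 <= sq2 (y - xs) -> norm2 (y - xs) <= rho ->
     f y <= f xs - eps) ->
  cube r x -> f xs - f x <= eps -> norm2 (x - xs) <= rho.
Proof.
move=> fc hgap rho0 epsc hb xc hfx.
have rhoE : rho = Num.sqrt (rho ^+ 2) by rewrite sqrtr_sqr ger0_norm // ltW.
rewrite leNgt; apply/negP => hx.
have sq0 : 0 < sq2 (x - xs).
  by rewrite -sqrtr_gt0 -norm2E (lt_trans rho0).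
have gx : rho ^+ 2 < sq2 (x - xs).
  by rewrite -ltr_sqrt // -norm2E -rhoE.
pose K := cube r `&` [set y | rho ^+ 2 <= sq2 (y - xs)].
have Kc : compact K.
  apply: compact_closedI; first exact: cube_compact.
  have := @preimage_closed _ _ (fun y : 'rV[R]_d => sq2 (y - xs)) [set t | rho ^+ 2 <= t].
  apply; last exact: closed_ge.
  by move=> y _; exact: sq2_cont.
have Kx : K x by split => //=; exact: ltW.
have [c cK cmax] : exists2 c, c \in K & forall t, t \in K -> f t <= f c.
  apply: EVT_max_rV => //; first by exists x.
  by apply: continuous_subspaceW fc; exact: subIsetl.
rewrite inE in cK.
have [z [zK gz zmax]] : exists z, [/\ K z, rho ^+ 2 < sq2 (z - xs) &
    forall t, K t -> f t <= f z].
  case: (ltrP (rho ^+ 2) (sq2 (c - xs))) => gc.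
    by exists c; split => // t tK; apply: cmax; rewrite inE.
  exists x; split => // t tK.
  have fc1 : f c <= f xs - eps.
    case: cK => cc cg; apply: hb => //.
    by rewrite norm2E rhoE ler_sqrt // sqr_ge0.
  have := cmax t; rewrite inE => /(_ tK) ft.
  lra.
have zloc : local_maximizer (cube r) f z.
  split; first by case: zK.
  pose U := (fun y => sq2 (y - xs)) @^-1` [set t | rho ^+ 2 < t].
  have oU : open U.
    have := @open_comp _ _ (fun y : 'rV[R]_d => sq2 (y - xs)) [set t | rho ^+ 2 < t].
    apply; last exact: open_gt.
    by move=> y _; exact: sq2_cont.
  have /nbhs_ballP [e e0 eU] : nbhs z U by apply: open_nbhs_nbhs; split.
  exists e => // y yc hy.
  apply: zmax; split => //; apply: ltW.
  apply: (eU y); split => // i j; rewrite (ord1 i) /ball /=.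
  rewrite distrC.
  have := coord_le_norm2 (y - z) j; rewrite !mxE => hj.
  exact: le_lt_trans hj hy.
have zxs : z <> xs.
  move=> ezs; move: gz; rewrite ezs subrr sq20.
  by rewrite ltNge sqr_ge0.
have := hgap z zloc zxs.
have := zmax x Kx.
lra.
Qed.

Lemma norm2_ge (R : realType) d (v : 'rV[R]_d) (rho : R) :
  0 < rho -> rho ^+ 2 <= sq2 v -> rho <= norm2 v.
Proof.
move=> rho0 h.
have rhoE : rho = Num.sqrt (rho ^+ 2) by rewrite sqrtr_sqr ger0_norm // ltW.
by rewrite rhoE norm2E ler_sqrt // (le_trans _ h) // sqr_ge0.
Qed.

Theorem lemma15 (R : realType) (d : nat) (r : R) (f : 'rV[R]_d -> R)
    (xs : 'rV[R]_d) (cgap : R) :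
  0 < r ->
  {within cube r, continuous f} ->
  unique_maximizer (cube r) f xs ->
  0 < cgap ->
  (forall xt, local_maximizer (cube r) f xt -> xt <> xs -> f xs > f xt + cgap) ->
  (forall clin rholin : R, 0 < clin -> 0 < rholin ->
     (forall x, ball2 (cube r) rholin xs x -> f x <= f xs - clin * norm2 (xs - x)) ->
     forall x, cube r x -> f xs - f x <= Num.min cgap (clin * rholin) ->
       ball2 (cube r) rholin xs x)
  /\
  (forall cquad rhoquad : R, 0 < cquad -> 0 < rhoquad ->
     (forall x, ball2 (cube r) rhoquad xs x ->
        f x <= f xs - cquad * norm2 (xs - x) ^+ 2) ->
     forall x, cube r x -> f xs - f x <= Num.min cgap (cquad * rhoquad ^+ 2) ->
       ball2 (cube r) rhoquad xs x).
Proof.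
move=> _ fc _ _ hgap; split.
- move=> c rho c0 rho0 hb x xc hx; split => //.
  have m1 : Num.min cgap (c * rho) <= cgap by rewrite ge_min lexx.
  have m2 : Num.min cgap (c * rho) <= c * rho by rewrite ge_min lexx orbT.
  apply: (key fc hgap rho0 m1) => // y yc gy ny.
  have := hb y (conj yc ny).
  rewrite -[xs - y]opprB norm2N => h.
  have := norm2_ge rho0 gy => hr.
  have : c * rho <= c * norm2 (y - xs) by rewrite ler_wpM2l // ltW.
  lra.
- move=> c rho c0 rho0 hb x xc hx; split => //.
  have m1 : Num.min cgap (c * rho ^+ 2) <= cgap by rewrite ge_min lexx.
  have m2 : Num.min cgap (c * rho ^+ 2) <= c * rho ^+ 2 by rewrite ge_min lexx orbT.
  apply: (key fc hgap rho0 m1) => // y yc gy ny.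
  have := hb y (conj yc ny).
  rewrite -[xs - y]opprB norm2N => h.
  have := norm2_ge rho0 gy => hr.
  have : c * rho ^+ 2 <= c * norm2 (y - xs) ^+ 2.
    apply: ler_wpM2l; first exact: ltW.
    by rewrite lerXn2r // ?nnegrE ?ltW // (lt_le_trans rho0).
  lra.
Qed.
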